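(* (SEM-ME) Let $M$ be a canonical linear SEM-ME satisfying SEM-ME faithfulness part (a). Then there is a total order on the ancestral ordered groups of $M$ such that, for every model $M'$ in the AOG equivalence class of $M$, every edge of $M'$ between variables lying in two different ancestral ordered groups goes from the earlier group to the later group. (SEM-UR) The analogous statement holds for a linear SEM-UR $M$ satisfying SEM-UR faithfulness part (a) and any $M'$ in its AOG equivalence class.
   Context: Linear SEM-ME (canonical form): underlying variables $V_1,\dots,V_p$ partitioned into unobserved $\mathcal Z$ and observed $\mathcal Y$, $V_i=\sum_{V_j\in Pa(V_i)}c_{ij}V_j+N_{V_i}$ over a DAG (edge $V_j\to V_i$ iff $c_{ij}\ne0$), measurements $U_i=Z_i+N_{U_i}$, independent noises. A u-leaf node is a $Z$-variable with no children; all others are nu-leaf nodes; in canonical form u-leaf nodes have zero noise and nu-leaf nodes nondegenerate noise. Since observedness of non-leaf variables does not affect the mixing matrix, a model is specified by its weighted DAG on the underlying variables and its set of u-leaf nodes. The mixing matrix $\mathbf W^{ME}$ has rows indexed by underlying variables, columns by noise terms $N_{V'}$ of nu-leaf nodes, $(V,N_{V'})$ entry = total causal effect of $V'$ on $V$ (sum over directed paths of products of weights; $1$ if $V=V'$). Linear SEM-UR: $H=N_H$, $X=\mathbf BH+\mathbf AX+N_X$ with $\mathbf A$ strictly lower triangular, independent noises; diagram has edges $H_i\to X_j$ iff $b_{ji}\neq0$ and $X_k\to X_j$ iff $a_{jk}\ne 0$; mixing matrix $\mathbf W^{UR}=[(\mathbf I-\mathbf A)^{-1}\mathbf B\;\;(\mathbf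 I-\mathbf A)^{-1}]$ with rows indexed by observed variables and columns by noise terms. $Pa,Ch,An,De$ denote parents, children, ancestors, descendants, with $An(V),De(V)$ excluding $V$. Faithfulness part (a): SEM-ME: the total causal effect of any underlying variable on any of its descendants is nonzero. SEM-UR: the total causal effect of any observed or latent variable on any of its descendants is nonzero. Ancestral ordered grouping (AOG). SEM-ME: each nu-leaf node is put in its own group; each u-leaf node $Z_j$ is put in the group of a parent $V_i$ if $Z_j$ has no other parents or all other parents of $Z_j$ are ancestors of $V_i$; otherwise $Z_j$ forms a singleton group. SEM-UR: each observed variable is put in its own group; each latent $H_j$ is put in the group of a child $X_i$ if $H_j$ has no other children or all other children of $H_j$ are descendants of $X_i$; otherwise $H_j$ forms a singleton group. AOG equivalence class of $M$: SEM-ME: the set of canonical SEM-ME models on the same underlying variables whose mixing matrix equals that of $M$ up to permutation and nonzero scaling of columns (rows matched by variable) and whose AOG is the same partition. SEM-UR: the set of SEM-UR models on the same observed variables with the same number of latent variables whose mixing matrix equals that of $M$ up to permutation and nonzero scaling of columns and whose AOG coincides with that of $M$ (up to relabeling latent variables). *)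

(* Defs.v *)
From HB Require Import structures.
From mathcomp Require Import all_boot all_order all_algebra.
Set Implicit Arguments. Unset Strict Implicit. Unset Printing Implicit Defensive.
Import Order.TTheory GRing.Theory Num.Theory.
Local Open Scope ring_scope.

(* Convention: G i j = weight c_ij of the edge j -> i (edge iff != 0).  *)
Section Graph.
Variable R : fieldType.
Variable p : nat.
Implicit Types G : 'M[R]_p.

Definition edge G : rel 'I_p := fun j i => G i j != 0.

Definition reach G : rel 'I_p := connect (edge G).

Definition desc G (j i : 'I_p) : bool := (i != j) && reach G j i.

Definition is_dag G : Prop := forall i j, edge G j i -> ~~ reach G i j.

(* total causal effect of j on i: sum over directed paths from j to i of
   the product of the edge weights (1 if i = j).  The (i,j) entry of G^k is
   the sum over directed walks of length k from j to i of the products of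
   weights; in a DAG on p nodes walks are paths and have length < p. *)
Definition total_effect G (i j : 'I_p) : R := (\sum_(k < p) G ^+ k) i j.

Definition parents G (v : 'I_p) : {set 'I_p} := [set i | G v i != 0].
Definition childless G (v : 'I_p) : bool := [forall i, G i v == 0].
End Graph.

(* Linear SEM-ME (canonical form): weighted DAG C on the p underlying   *)
(* variables, U = set of u-leaf nodes (Z-variables without children).   *)
Section SEMME.
Variable R : fieldType.
Variable p : nat.
Implicit Types (C : 'M[R]_p) (U : {set 'I_p}).

Definition sem_me C U : Prop :=
  is_dag C /\ (forall v, v \in U -> childless C v).

Definition me_faithful_a C : Prop :=
  forall j i, desc C j i -> total_effect C i j != 0.

(* Mixing matrix W^ME: rows = all underlying variables v, columns = noise
   terms N_j of the nu-leaf nodes j (j \notin U); entry = total_effect C v j.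
   Equality up to permutation and nonzero scaling of columns: *)
Definition me_mixing_equiv C U C' U' : Prop :=
  exists sigma : 'I_p -> 'I_p,
    {in ~: U &, injective sigma} /\ sigma @: (~: U) = ~: U' /\
    exists lam : 'I_p -> R, forall j, j \in ~: U ->
      lam j != 0 /\ forall v, total_effect C v j = lam j * total_effect C' v (sigma j).

(* Ancestral ordered grouping: representative of the group of v.
   nu-leaf nodes represent their own group; a u-leaf Z joins the group of a
   parent V_i all of whose other parents are ancestors of V_i (such a parent
   is unique in a DAG); otherwise Z is a singleton. *)
Definition aog_rep C U (v : 'I_p) : 'I_p :=
  if v \in U then
    odflt v [pick i | (i \in parents C v) &&
                      [forall k, ((k \in parents C v) && (k != i)) ==> desc C k i]]
  else v.

Definition aog_group C U (v : 'I_p) : {set 'I_p} :=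
  [set w | aog_rep C U w == aog_rep C U v].

Definition aog C U : {set {set 'I_p}} := [set aog_group C U v | v : 'I_p].

Definition me_aog_class C U C' U' : Prop :=
  sem_me C' U' /\ me_mixing_equiv C U C' U' /\ aog C' U' = aog C U.
End SEMME.

(* Linear SEM-UR: l latent H, n observed X; X = B H + A X + N_X.        *)
(* Diagram on the nodes 'I_(l + n): lshift n i = H_i, rshift l j = X_j. *)
Section SEMUR.
Variable R : fieldType.
Variables l n : nat.
Implicit Types (B : 'M[R]_(n, l)) (A : 'M[R]_n).

Definition strictly_lower A : Prop := forall j k : 'I_n, (j <= k)%N -> A j k = 0.

Definition ur_graph B A : 'M[R]_(l + n) :=
  \matrix_(u, v) match split u, split v with
                 | inr j, inl i => B j i
                 | inr j, inr k => A j k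
                 | _, _ => 0
                 end.

Definition ur_faithful_a B A : Prop :=
  forall u v, desc (ur_graph B A) u v -> total_effect (ur_graph B A) v u != 0.

Definition ur_mixing B A : 'M[R]_(n, l + n) :=
  row_mx (invmx (1%:M - A) *m B) (invmx (1%:M - A)).

Definition ur_mixing_equiv B A B' A' : Prop :=
  exists sigma : 'I_(l + n) -> 'I_(l + n), injective sigma /\
    exists lam : 'I_(l + n) -> R, forall c,
      lam c != 0 /\ forall r, ur_mixing B A r c = lam c * ur_mixing B' A' r (sigma c).

(* AOG representative: observed variables represent themselves; a latent H_j
   joins the group of a child X_i all of whose other children are
   descendants of X_i; otherwise H_j is a singleton. *)
Definition ur_aog_rep B A (u : 'I_(l + n)) : 'I_(l + n) :=
  match split u with
  | inl j =>
      match [pick i : 'I_n | (B i j != 0) &&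
               [forall k : 'I_n, ((B k j != 0) && (k != i)) ==>
                   desc (ur_graph B A) (rshift l i) (rshift l k)]] with
      | Some i => rshift l i
      | None => u
      end
  | inr _ => u
  end.

Definition ur_aog_group B A (u : 'I_(l + n)) : {set 'I_(l + n)} :=
  [set w | ur_aog_rep B A w == ur_aog_rep B A u].

Definition ur_aog B A : {set {set 'I_(l + n)}} := [set ur_aog_group B A u | u : 'I_(l + n)].

Definition relabel (pi : 'I_l -> 'I_l) (u : 'I_(l + n)) : 'I_(l + n) :=
  match split u with
  | inl i => lshift n (pi i)
  | inr j => rshift l j
  end.

(* M' = (B', A') lies in the AOG equivalence class of M = (B, A), the AOG
   coincidence being witnessed by the latent relabeling pi *)
Definition ur_aog_class B A B' A' (pi : 'I_l -> 'I_l) : Prop :=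
  strictly_lower A' /\ ur_mixing_equiv B A B' A' /\ injective pi /\
  ur_aog B' A' = [set relabel pi @: S | S : {set 'I_(l + n)} in ur_aog B A].
End SEMUR.

(* Main.v *)
Require Import Defs.
From HB Require Import structures.
From mathcomp Require Import all_boot all_order all_algebra.
From mathcomp Require Import zify.
Set Implicit Arguments. Unset Strict Implicit. Unset Printing Implicit Defensive.
Import Order.TTheory GRing.Theory Num.Theory.
Local Open Scope ring_scope.

Section Closure.
Variable R : fieldType.
Variable p : nat.
Variable rl : rel 'I_p.
Hypothesis rlR : reflexive rl.
Hypothesis rlT : forall a b c, rl a b -> rl b c -> rl a c.

Definition Pm (M : 'M[R]_p) := forall i j, M i j != 0 -> rl j i.

Lemma Pm0 : Pm 0.
Proof. by move=> i j; rewrite mxE eqxx. Qed.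

Lemma Pm1 : Pm 1.
Proof.
move=> i j; rewrite mxE; case: (eqVneq i j) => [->|]; first by rewrite rlR.
by rewrite /= eqxx.
Qed.

Lemma PmD A B : Pm A -> Pm B -> Pm (A + B).
Proof.
move=> HA HB i j; rewrite mxE.
case: (eqVneq (A i j) 0) => [->|/HA //]; rewrite add0r; exact: HB.
Qed.

Lemma PmN A : Pm A -> Pm (- A).
Proof. by move=> HA i j; rewrite mxE oppr_eq0; apply: HA. Qed.

Lemma PmM A B : Pm A -> Pm B -> Pm (A * B).
Proof.
move=> HA HB i j; rewrite -mulmxE mxE => H.
case: (pickP (fun x => A i x * B x j != 0)) => [x Hx | H0].
  rewrite mulf_eq0 negb_or in Hx; case/andP: Hx => H1 H2.
  exact: rlT (HB _ _ H2) (HA _ _ H1).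
move: H; rewrite big1 ?eqxx // => x _; apply/eqP; exact: negbFE (H0 x).
Qed.

Lemma PmX A m : Pm A -> Pm (A ^+ m).
Proof.
move=> HA; elim: m => [|m IH]; first by rewrite expr0; exact: Pm1.
by rewrite exprS; apply: PmM.
Qed.

Lemma PmSum (F : 'I_p -> 'M[R]_p) : (forall k, Pm (F k)) -> Pm (\sum_(k < p) F k).
Proof.
move=> HF; apply: (big_ind Pm); [exact: Pm0 | exact: PmD | by move=> k _].
Qed.
End Closure.

Section Graph.
Variable R : fieldType.
Variable p : nat.
Implicit Types G : 'M[R]_p.

Definition pot G (v : 'I_p) : nat := #|[set u | reach G u v]|.

Lemma reach_first G a b : reach G a b -> a != b -> exists2 x, edge G a x & reach G x b.
Proof.
case/connectP=> [[|x s]] /=; first by move=> _ ->; rewrite eqxx.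
case/andP=> Hax Hp -> _; exists x => //; apply/connectP; by exists s.
Qed.

Lemma reach_last G a b : reach G a b -> a != b -> exists2 x, reach G a x & edge G x b.
Proof.
move=> H; rewrite eq_sym => Hne.
have : connect (SimplRel (fun x y => edge G y x)) b a by rewrite connect_rev.
case/connectP=> [[|x s]] /=; first by move=> _ E; rewrite E eqxx in Hne.
case/andP=> Hax Hp E; exists x => //.
have : connect (SimplRel (fun x y => edge G y x)) x a by apply/connectP; exists s.
by rewrite connect_rev.
Qed.

Lemma reach_cycle G a b : is_dag G -> reach G a b -> reach G b a -> a = b.
Proof.
move=> Hd Hab Hba; apply/eqP/negPn/negP=> Hne.
have [x Hax Hxb] := reach_first Hab Hne.
by move: (Hd _ _ Hax); rewrite /reach (connect_trans Hxb Hba).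
Qed.

Lemma pot_edge G j i : is_dag G -> edge G j i -> (pot G j < pot G i)%N.
Proof.
move=> Hd He; apply: proper_card; rewrite properE; apply/andP; split.
  apply/subsetP=> u; rewrite !inE => Hu; apply: connect_trans Hu _; exact: connect1.
apply/subsetPn; exists i; first by rewrite inE /reach connect0.
by rewrite inE; apply: Hd.
Qed.

Lemma pot_reach G a b : is_dag G -> reach G a b -> a != b -> (pot G a < pot G b)%N.
Proof.
move=> Hd Hab Hne; apply: proper_card; rewrite properE; apply/andP; split.
  apply/subsetP=> u; rewrite !inE => Hu; exact: connect_trans Hu Hab.
apply/subsetPn; exists b; first by rewrite inE /reach connect0.
rewrite inE; apply/negP=> Hba; by rewrite (reach_cycle Hd Hab Hba) eqxx in Hne.
Qed.

Lemma pot_bounds G v : (0 < pot G v <= p)%N.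
Proof.
apply/andP; split.
  by apply/card_gt0P; exists v; rewrite inE /reach connect0.
by rewrite -[X in (_ <= X)%N]card_ord max_card.
Qed.

Lemma Pm_G G : Pm (reach G) G.
Proof. move=> i j H; exact: connect1. Qed.

Lemma reachT G : forall a b c, reach G a b -> reach G b c -> reach G a c.
Proof. move=> a b c; exact: connect_trans. Qed.

Lemma Pm_pow G m : Pm (reach G) (G ^+ m).
Proof. apply: (@PmX R p (reach G)); [move=> x; exact: connect0 | exact: reachT | exact: Pm_G]. Qed.

Definition TE G : 'M[R]_p := \sum_(k < p) G ^+ k.

Lemma teE G i j : total_effect G i j = TE G i j.
Proof. by []. Qed.

Lemma Pm_TE G : Pm (reach G) (TE G).
Proof.
apply: PmSum => k; exact: Pm_pow.
Qed.

Lemma te_reach G v j : total_effect G v j != 0 -> reach G j v.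
Proof. exact: Pm_TE. Qed.

Lemma pow_pot G m i j : is_dag G -> (G ^+ m) i j != 0 -> (pot G j + m <= pot G i)%N.
Proof.
move=> Hd; elim: m i => [|m IH] i.
  rewrite expr0 mxE; case: (eqVneq i j) => [->|]; first by rewrite addn0.
  by rewrite /= eqxx.
rewrite exprS -mulmxE mxE => H.
case: (pickP (fun x => G i x * (G ^+ m) x j != 0)) => [x Hx | H0].
  rewrite mulf_eq0 negb_or in Hx; case/andP: Hx => H1 H2.
  have := IH _ H2; have := pot_edge Hd H1; lia.
move: H; rewrite big1 ?eqxx // => x _; apply/eqP; exact: negbFE (H0 x).
Qed.

Lemma pow_nil G : is_dag G -> G ^+ p = 0.
Proof.
move=> Hd; apply/matrixP=> i j; rewrite [RHS]mxE.
apply/eqP/negPn/negP=> H; have := pow_pot Hd H.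
have := pot_bounds G i; have := pot_bounds G j; lia.
Qed.

Lemma te_diag G j : is_dag G -> total_effect G j j = 1.
Proof.
move=> Hd; rewrite teE /TE summxE.
have p0 : (0 < p)%N := leq_ltn_trans (leq0n j) (ltn_ord j).
rewrite (bigD1 (Ordinal p0)) //= expr0 mxE eqxx big1 ?addr0 // => k Hk.
apply/eqP/negPn/negP=> H; have := pow_pot Hd H.
have : (k : nat) != 0%N by move: Hk; apply: contra => /eqP Hk; apply/eqP/val_inj.
lia.
Qed.

Lemma GTE G : is_dag G -> G * TE G = TE G - 1.
Proof.
move=> Hd; rewrite /TE mulr_sumr.
have E1 : \sum_(k < p.+1) G ^+ k = \sum_(k < p) G ^+ k + G ^+ p by rewrite big_ord_recr.
have E2 : \sum_(k < p.+1) G ^+ k = 1 + \sum_(k < p) G ^+ k.+1 by rewrite big_ord_recl.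
under eq_bigr do rewrite -exprS.
by rewrite pow_nil // addr0 in E1; rewrite E1 in E2; rewrite E2 addrC addKr.
Qed.

Lemma TEG G : is_dag G -> TE G * G = TE G - 1.
Proof.
move=> Hd; rewrite /TE mulr_suml.
have E1 : \sum_(k < p.+1) G ^+ k = \sum_(k < p) G ^+ k + G ^+ p by rewrite big_ord_recr.
have E2 : \sum_(k < p.+1) G ^+ k = 1 + \sum_(k < p) G ^+ k.+1 by rewrite big_ord_recl.
under eq_bigr do rewrite -exprSr.
by rewrite pow_nil // addr0 in E1; rewrite E1 in E2; rewrite E2 addrC addKr.
Qed.

Lemma te_row G k q : is_dag G ->
  total_effect G k q = (k == q)%:R + \sum_x G k x * total_effect G x q.
Proof.
move=> Hd; have : TE G = 1 + G * TE G by rewrite GTE // addrC subrK.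
by move/matrixP/(_ k q); rewrite teE => ->; rewrite !mxE.
Qed.

Lemma te_col G k q : is_dag G ->
  total_effect G k q = (k == q)%:R + \sum_x total_effect G k x * G x q.
Proof.
move=> Hd; have : TE G = 1 + TE G * G by rewrite TEG // addrC subrK.
by move/matrixP/(_ k q); rewrite teE => ->; rewrite !mxE.
Qed.

Lemma Pm_from_TE rl G : reflexive rl -> (forall a b c, rl a b -> rl b c -> rl a c) ->
  is_dag G -> Pm rl (TE G) -> Pm rl G.
Proof.
move=> HR HT Hd HP.
set N := TE G - 1.
have PN : Pm rl N by apply: PmD => //; apply: PmN => //; exact: Pm1.
have E : G = N - N * G by rewrite /N mulrBl TEG // mul1r opprB addrC subrK.
have Np : N ^+ p = 0.
  rewrite /N -GTE // exprMn_comm; first by rewrite pow_nil // mul0r.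
  by rewrite /GRing.comm GTE // TEG.
have key : forall d m, (p <= m + d)%N -> Pm rl (N ^+ m * G).
  elim=> [|d IH] m Hm.
    rewrite addn0 in Hm; rewrite -(subnK Hm) exprD Np mulr0 mul0r; exact: Pm0.
  rewrite {1}E mulrBr mulrA -exprSr; apply: PmD; first exact: PmX.
  apply: PmN; apply: IH; lia.
have := key p 0%N (leq_addl _ _); by rewrite expr0 mul1r.
Qed.

End Graph.

Section ME.
Variable R : fieldType.
Variable p : nat.
Variables (C : 'M[R]_p) (U : {set 'I_p}).
Hypothesis HC : sem_me C U.
Hypothesis HF : me_faithful_a C.

Let dagC : is_dag C. Proof. by case: HC. Qed.

Lemma te_of_reach k v : reach C k v -> total_effect C v k != 0.
Proof.
move=> H; case: (eqVneq v k) => [->|Hne]; first by rewrite te_diag // oner_eq0.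
by apply: HF; rewrite /desc Hne.
Qed.

Definition rr := aog_rep C U.

Lemma rr_nu v : v \notin U -> rr v = v.
Proof. by move=> H; rewrite /rr /aog_rep (negbTE H). Qed.

Lemma reach_rep k v : k \notin U -> reach C k v -> reach C k (rr v).
Proof.
move=> Hk Hkv; case: (boolP (v \in U)) => Hv; last by rewrite rr_nu.
rewrite /rr /aog_rep Hv.
case: pickP => [i /andP [Hi Hall]|_] //=.
have Hne : k != v by apply: contraNneq Hk => ->.
have [q Hkq Hqv] := reach_last Hkv Hne.
case: (eqVneq q i) => [<- //|Hqi].
move/forallP: Hall => /(_ q); rewrite inE -/(edge C q v) Hqv Hqi /= => /andP [_ Hqi2].
exact: connect_trans Hkq Hqi2.
Qed.

Variables (C' : 'M[R]_p) (U' : {set 'I_p}).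
Hypothesis HC' : sem_me C' U'.
Variable sg : 'I_p -> 'I_p.
Hypothesis Hinj : {in ~: U &, injective sg}.
Hypothesis Him : sg @: (~: U) = ~: U'.
Variable lam : 'I_p -> R.
Hypothesis Hlam : forall j, j \in ~: U ->
      lam j != 0 /\ forall v, total_effect C v j = lam j * total_effect C' v (sg j).
Hypothesis Haog : aog C' U' = aog C U.

Let dagC' : is_dag C'. Proof. by case: HC'. Qed.

Lemma mixnz k v : k \in ~: U ->
  (total_effect C v k != 0) = (total_effect C' v (sg k) != 0).
Proof.
move=> Hk; have [H0 ->] := Hlam Hk; by rewrite mulf_eq0 negb_or H0.
Qed.

Lemma S1 k : k \in ~: U -> reach C k (sg k).
Proof.
move=> Hk; apply: te_reach; by rewrite mixnz // te_diag // oner_eq0.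
Qed.

Lemma sg_in k : k \in ~: U -> sg k \in ~: U'.
Proof. by move=> Hk; rewrite -Him imset_f. Qed.

Lemma LL k m : k \in ~: U -> m \in ~: U -> k != m ->
  reach C k (sg m) -> reach C m (sg k) -> False.
Proof.
move=> Hk Hm Hne H1 H2.
have R1 : reach C' (sg k) (sg m) by apply: te_reach; rewrite -mixnz //; exact: te_of_reach.
have R2 : reach C' (sg m) (sg k) by apply: te_reach; rewrite -mixnz //; exact: te_of_reach.
have E := reach_cycle dagC' R1 R2.
by rewrite (Hinj Hk Hm E) eqxx in Hne.
Qed.

Lemma S2 k : k \in ~: U -> sg k != k -> sg k \in U.
Proof.
move=> Hk Hne; apply/negPn/negP=> Hs.
have Hs' : sg k \in ~: U by rewrite inE.
apply: (LL Hk Hs').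
- by rewrite eq_sym.
- exact: connect_trans (S1 Hk) (S1 Hs').
- exact: connect0.
Qed.

Lemma S3 k : k \in ~: U -> sg k != k -> k \in U'.
Proof.
move=> Hk Hne; apply/negPn/negP=> Hk'.
have : k \in ~: U' by rewrite inE.
rewrite -Him => /imsetP [k2 Hk2 E].
case: (eqVneq (sg k2) k2) => [E2|Hne2].
  by move: Hne; rewrite E !E2 eqxx.
by have := S2 Hk2 Hne2; rewrite -E; move: Hk; rewrite inE => /negbTE ->.
Qed.

Lemma lm k q : C' k q != 0 -> exists qs, [/\ C' k qs != 0, reach C' q qs &
   forall q2, C' k q2 != 0 -> reach C' qs q2 -> q2 = qs].
Proof.
move=> Hq.
pose P := [pred x | (C' k x != 0) && reach C' q x].
have Pq : P q by rewrite inE /= Hq /reach connect0.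
case: (@arg_maxnP _ q P (pot C') Pq) => qs /andP [H1 H2] Hmax.
exists qs; split => // q2 Hq2 R2.
case: (eqVneq q2 qs) => // Hne; exfalso.
have : P q2 by rewrite inE /= Hq2 /=; exact: connect_trans H2 R2.
move/Hmax => /= Hle.
have := pot_reach dagC' R2; rewrite eq_sym Hne => /(_ isT); move: Hle; lia.
Qed.

Lemma childlessP v i : v \in U' -> C' i v = 0.
Proof.
case: HC' => _ H /H /forallP /(_ i) /eqP //.
Qed.

Lemma lmz k qs : k \in ~: U -> sg k != k -> C' k qs != 0 ->
   (forall q2, C' k q2 != 0 -> reach C' qs q2 -> q2 = qs) -> qs = sg k.
Proof.
move=> Hk Hne Hqs Hmax.
have Hkq : k != qs.
  apply/negP=> /eqP E; subst qs.
  by have := dagC' (i:=k) (j:=k) Hqs; rewrite /reach connect0.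
have Tk : total_effect C' k qs = C' k qs.
  rewrite te_row // (negbTE Hkq) add0r (bigD1 qs) //= te_diag // mulr1 big1 ?addr0 //.
  move=> x Hx; case: (eqVneq (C' k x) 0) => [->|Hx0]; first by rewrite mul0r.
  case: (eqVneq (total_effect C' x qs) 0) => [->|Hte]; first by rewrite mulr0.
  by have := Hmax x Hx0 (te_reach Hte) => E; rewrite E eqxx in Hx.
have Hqs' : qs \in ~: U'.
  rewrite inE; apply/negP=> H; by rewrite childlessP // eqxx in Hqs.
move: (Hqs'); rewrite -Him => /imsetP [k2 Hk2 E].
have Rk2 : reach C k2 k.
  by apply: te_reach; rewrite mixnz // -E Tk.
have R1 : reach C' qs (sg k).
  rewrite E; apply: te_reach; rewrite -mixnz //; apply: te_of_reach.
  exact: connect_trans Rk2 (S1 Hk).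
have R2 : reach C' (sg k) k.
  by apply: te_reach; rewrite -mixnz // te_diag // oner_eq0.
have [q1 Hsq1 Hq1k] := reach_last R2 Hne.
have Eq1 : q1 = qs by apply: Hmax => //; exact: connect_trans R1 Hsq1.
subst q1; exact: reach_cycle dagC' R1 Hsq1.
Qed.

Definition rr' := aog_rep C' U'.

Lemma S4 k : k \in ~: U -> sg k != k -> rr' k = sg k.
Proof.
move=> Hk Hne.
have HkU' := S3 Hk Hne.
have par : forall q, C' k q != 0 -> reach C' q (sg k).
  move=> q Hq; have [qs [H1 H2 H3]] := lm Hq.
  by rewrite -(lmz Hk Hne H1 H3).
have R2 : reach C' (sg k) k.
  by apply: te_reach; rewrite -mixnz // te_diag // oner_eq0.
have [q1 _ Hq1k] := reach_last R2 Hne.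
have Hspar : C' k (sg k) != 0.
  have [qs [H1 H2 H3]] := lm Hq1k; by rewrite -(lmz Hk Hne H1 H3).
have Psk : (sg k \in parents C' k) &&
   [forall x, ((x \in parents C' k) && (x != sg k)) ==> desc C' x (sg k)].
  rewrite inE Hspar /=; apply/forallP=> x; apply/implyP; rewrite inE => /andP [Hx Hxs].
  by rewrite /desc eq_sym Hxs par.
rewrite /rr' /aog_rep HkU'.
case: pickP => [i /andP [Hi Hall]|H]; last by rewrite H in Psk.
case: (eqVneq i (sg k)) => // Hisk.
move/forallP: Hall => /(_ (sg k)); rewrite inE Hspar eq_sym Hisk /= => /andP [_ Ri].
move/andP: Psk => [_ /forallP /(_ i)]; rewrite Hi Hisk /= => /andP [_ Ri2].
exact: reach_cycle dagC' Ri2 Ri.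
Qed.

Lemma S5 k : k \in ~: U -> rr (sg k) = k.
Proof.
move=> Hk; case: (eqVneq (sg k) k) => [->|Hne].
  by rewrite rr_nu // -in_setC.
have Hg : aog_group C U k \in aog C' U' by rewrite Haog imset_f.
case/imsetP: Hg => w _ Ew.
have : k \in aog_group C' U' w by rewrite -Ew inE.
have Hsk : rr' (sg k) = sg k by rewrite /rr' /aog_rep; move: (sg_in Hk); rewrite inE => /negbTE ->.
rewrite inE -/rr' (S4 Hk Hne) => /eqP E.
have : sg k \in aog_group C' U' w by rewrite inE -/rr' Hsk E.
rewrite -Ew inE => /eqP; rewrite -/rr => ->.
by rewrite rr_nu // -in_setC.
Qed.

Definition relC (a b : 'I_p) := reach C (rr a) (rr b).

Lemma PT' : Pm relC (TE C').
Proof.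
move=> v j; rewrite -teE => H.
case: (boolP (j \in U')) => Hj.
  have E : total_effect C' v j = (v == j)%:R.
    rewrite te_col // big1 ?addr0 // => x _; by rewrite childlessP // mulr0.
  move: H; rewrite E; case: (eqVneq v j) => [->|]; by rewrite ?eqxx /relC /reach ?connect0.
have : j \in ~: U' by rewrite inE.
rewrite -Him => /imsetP [k Hk Ej]; subst j.
rewrite /relC S5 //; apply: reach_rep; first by rewrite -in_setC.
by apply: te_reach; rewrite mixnz.
Qed.

Lemma PC' : Pm relC C'.
Proof.
apply: Pm_from_TE dagC' PT'.
- move=> a; exact: connect0.
- move=> a b c; exact: connect_trans.
Qed.

End ME.

Lemma me_part (R : fieldType) (p : nat) (C : 'M[R]_p) (U : {set 'I_p}) :
     sem_me C U -> me_faithful_a C ->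
     exists f : {set 'I_p} -> nat,
       {in aog C U &, injective f} /\
       forall (C' : 'M[R]_p) (U' : {set 'I_p}), me_aog_class C U C' U' ->
         forall j i : 'I_p, edge C' j i ->
           aog_group C U j != aog_group C U i ->
           (f (aog_group C U j) < f (aog_group C U i))%N.
Proof.
move=> HC HF.
pose kap (a : 'I_p) := (pot C a * p + a)%N.
pose f (S : {set 'I_p}) := if [pick w in S] is Some w then kap (aog_rep C U w) else 0%N.
have fE : forall u, f (aog_group C U u) = kap (aog_rep C U u).
  move=> u; rewrite /f; case: pickP => [w|H].
    by rewrite inE => /eqP ->.
  by have := H u; rewrite inE eqxx.
have grE : forall u v, aog_rep C U u = aog_rep C U v -> aog_group C U u = aog_group C U v.
  by move=> u v E; apply/setP=> w; rewrite !inE E.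
have kap_inj : injective kap.
  move=> a b; rewrite /kap => E; apply: val_inj => /=.
  have := congr1 (modn^~ p) E; rewrite /= !modnMDl !modn_small //.
exists f; split.
  move=> S1 S2 /imsetP [u1 _ ->] /imsetP [u2 _ ->]; rewrite !fE => /kap_inj E.
  exact: grE.
move=> C' U' [HC' [[sg [Hinj [Him [lam Hlam]]]] Haog]] j i He Hne.
have := PC' HC HF HC' Hinj Him Hlam Haog He; rewrite /relC /rr => Hr.
rewrite !fE.
have Hne' : aog_rep C U j != aog_rep C U i by apply: contra Hne => /eqP /grE ->.
have dagC : is_dag C by case: HC.
have := pot_reach dagC Hr Hne'; rewrite /kap.
have := ltn_ord (aog_rep C U j); have := ltn_ord (aog_rep C U i); nia.
Qed.

Section UR.
Variable R : fieldType.
Variables l n : nat.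

Lemma split_l (i : 'I_l) : split (lshift n i) = inl i.
Proof. exact: (unsplitK (inl i)). Qed.
Lemma split_r (i : 'I_n) : split (rshift l i) = inr i.
Proof. exact: (unsplitK (inr i)). Qed.

Lemma ur_edge_lt (B : 'M[R]_(n, l)) A x y :
  strictly_lower A -> edge (ur_graph B A) x y -> (x < y)%N.
Proof.
move=> HA; rewrite /edge mxE.
case: (splitP y) => [j Hj|j Hj]; first by rewrite eqxx.
case: (splitP x) => [k Hk|k Hk] H.
  rewrite Hj Hk; have := ltn_ord k; lia.
rewrite Hj Hk; have : ~~ (j <= k)%N by apply: contra H => /HA ->.
lia.
Qed.

Lemma ur_reach_le (B : 'M[R]_(n, l)) A x y :
  strictly_lower A -> reach (ur_graph B A) x y -> (x <= y)%N.
Proof.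
move=> HA /connectP [s]; elim: s x => [|z s IH] x /=; first by move=> _ ->.
case/andP=> He Hp Hy; have := ur_edge_lt HA He; have := IH _ Hp Hy; lia.
Qed.

Lemma ur_part (B : 'M[R]_(n, l)) (A : 'M[R]_n) :
     strictly_lower A -> ur_faithful_a B A ->
     exists f : {set 'I_(l + n)} -> nat,
       {in ur_aog B A &, injective f} /\
       forall (B' : 'M[R]_(n, l)) (A' : 'M[R]_n) (pi : 'I_l -> 'I_l),
         ur_aog_class B A B' A' pi ->
         forall u v : 'I_(l + n), edge (ur_graph B' A') (relabel pi u) (relabel pi v) ->
           ur_aog_group B A u != ur_aog_group B A v ->
           (f (ur_aog_group B A u) < f (ur_aog_group B A v))%N.
Proof.
move=> HA _.
pose r := ur_aog_rep B A.
pose f (S : {set 'I_(l + n)}) := if [pick w in S] is Some w then nat_of_ord (r w) else 0%N.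
have fE : forall u, f (ur_aog_group B A u) = r u.
  move=> u; rewrite /f; case: pickP => [w|H].
    by rewrite inE /r => /eqP ->.
  by have := H u; rewrite inE eqxx.
have grE : forall u v, r u = r v -> ur_aog_group B A u = ur_aog_group B A v.
  by move=> u v E; apply/setP=> w; rewrite !inE /r -/r E.
exists f; split.
  move=> S1 S2 /imsetP [u1 _ ->] /imsetP [u2 _ ->]; rewrite !fE => E.
  by apply: grE; apply: val_inj.
move=> B' A' pi [HA' [_ [_ Haog]]] u v.
rewrite !fE /relabel.
have rv : forall b : 'I_n, r (rshift l b) = rshift l b.
  by move=> b; rewrite /r /ur_aog_rep split_r.
case: (splitP v) => [b Hb|b Hb].
  rewrite /edge mxE split_l; by rewrite eqxx.
have Ev : v = rshift l b by apply: val_inj.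
rewrite Ev rv => He Hne.
case: (splitP u) => [j Hj|a Ha] in He Hne *; last first.
  have Eu : u = rshift l a by apply: val_inj.
  rewrite Eu rv; have := ur_edge_lt HA' He; by [].
have Eu : u = lshift n j by apply: val_inj.
rewrite Eu in Hne *.
have [rl0|[i ru]] : r (lshift n j) = lshift n j \/ exists i, r (lshift n j) = rshift l i.
    rewrite /r /ur_aog_rep split_l; case: pickP => [i _|_]; [right; by exists i | by left].
  rewrite rl0 /=; have := ltn_ord j; lia.
rewrite ru.
have Hg : relabel pi @: ur_aog_group B A (lshift n j) \in ur_aog B' A'.
  rewrite Haog; apply/imsetP; exists (ur_aog_group B A (lshift n j)) => //.
  exact: imset_f.
case/imsetP: Hg => w _ Ew.
have m1 : lshift n (pi j) \in ur_aog_group B' A' w.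
  rewrite -Ew; apply/imsetP; exists (lshift n j); first by rewrite inE.
  by rewrite /relabel split_l.
have m2 : rshift l i \in ur_aog_group B' A' w.
  rewrite -Ew; apply/imsetP; exists (rshift l i).
    by rewrite inE -/r rv ru.
  by rewrite /relabel split_r.
rewrite !inE in m1 m2; move/eqP: m2; rewrite {1}/ur_aog_rep split_r; move/eqP: m1 => <- {w Ew}.
rewrite /ur_aog_rep split_l; case: pickP => [i' Hi'|_]; last first.
  by move=> E; have := eq_lrshift (pi j) i; rewrite E eqxx.
move/rshift_inj=> Ei; subst i'.
case/andP: Hi' => _ /forallP /(_ b).
rewrite /edge mxE split_r split_l in He; rewrite He /=.
case: (eqVneq b i) => [Ebi|Hbi] /= H.
  by subst b; rewrite (grE _ _ (etrans ru (esym (rv i)))) eqxx in Hne.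
case/andP: H => _ H; have := ur_reach_le HA' H; rewrite /=.
have : (b : nat) != i by apply: contra Hbi => /eqP Hv; apply/eqP/val_inj.
lia.
Qed.
End UR.

Theorem proposition1 (R : realFieldType) :
  (forall (p : nat) (C : 'M[R]_p) (U : {set 'I_p}),
     sem_me C U -> me_faithful_a C ->
     exists f : {set 'I_p} -> nat,
       {in aog C U &, injective f} /\
       forall (C' : 'M[R]_p) (U' : {set 'I_p}), me_aog_class C U C' U' ->
         forall j i : 'I_p, edge C' j i ->
           aog_group C U j != aog_group C U i ->
           (f (aog_group C U j) < f (aog_group C U i))%N)
  /\
  (forall (l n : nat) (B : 'M[R]_(n, l)) (A : 'M[R]_n),
     strictly_lower A -> ur_faithful_a B A ->
     exists f : {set 'I_(l + n)} -> nat,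
       {in ur_aog B A &, injective f} /\
       forall (B' : 'M[R]_(n, l)) (A' : 'M[R]_n) (pi : 'I_l -> 'I_l),
         ur_aog_class B A B' A' pi ->
         forall u v : 'I_(l + n), edge (ur_graph B' A') (relabel pi u) (relabel pi v) ->
           ur_aog_group B A u != ur_aog_group B A v ->
           (f (ur_aog_group B A u) < f (ur_aog_group B A v))%N).
Proof.
split.
- move=> p C U; exact: me_part.
- move=> l n B A; exact: ur_part.
Qed.
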